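(* Let $D=\sum_{m=-\infty}^{M}\sum_{k=-\infty}^{K}C_{km}x^k(d/dx)^m\in\Psi\mathfrak D$ with $C_{KM}\ne0$. Then $D$ is invertible in $\Psi\mathfrak D$.
   Context: $\Psi\mathfrak D$ is the algebra of all formal series $\sum_{m=-\infty}^{M}\sum_{k=-\infty}^{K}C_{km}x^k(d/dx)^m$ with $C_{km}\in\mathbb C$ and integers $M,K$ depending on the series, with multiplication determined by $(d/dx)^m x^k=\sum_{j\ge0}\frac{(m)_j(k)_j}{j!}x^{k-j}(d/dx)^{m-j}$ for $m,k\in\mathbb Z$, where $(a)_j=a(a-1)\cdots(a-j+1)$. *)

(* Defs.v *)
From mathcomp Require Import all_boot all_algebra.
From mathcomp Require Import complex reals.
From mathcomp Require Import order ssralg ssrnum.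
Set Implicit Arguments. Unset Strict Implicit. Unset Printing Implicit Defensive.
Import Order.TTheory GRing.Theory Num.Theory.
Local Open Scope ring_scope.

Section PsiD.
Variable F : fieldType.

(* An element of ΨD is given by its coefficient function (k, m) |-> C_{km}
   (coefficient of x^k (d/dx)^m), whose support lies in {k <= K, m <= M}. *)
Definition psi_bounded (C : int -> int -> F) (K M : int) : Prop :=
  forall k m : int, (K < k) || (M < m) -> C k m = 0.

Definition zsum (lo hi : int) (f : int -> F) : F :=
  if lo <= hi then \sum_(i < (absz (hi - lo)).+1) f (lo + (i : nat)%:Z) else 0.

Definition ffz (a : int) (j : nat) : F := \prod_(i < j) (a - (i : nat)%:Z)%:~R.

(* Coefficient of x^k (d/dx)^m in the product A * B, where A is supported in
   {k <= K1, m <= M1} and B in {k <= K2, m <= M2}, using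
   (x^a D^b)(x^c D^d) = sum_{j>=0} (b)_j (c)_j / j! x^(a+c-j) D^(b+d-j).
   Terms contribute only when a <= K1, c = k+j-a <= K2, b <= M1,
   d = m+j-b <= M2, j >= 0, so the sum below is the full (finite) sum. *)
Definition psi_mul (A B : int -> int -> F) (K1 M1 K2 M2 : int)
  (k m : int) : F :=
  zsum 0 (K1 + K2 - k) (fun j =>
    zsum (k + j - K2) K1 (fun a =>
      zsum (m + j - M2) M1 (fun b =>
        A a b * B (k + j - a) (m + j - b)
          * (ffz b (absz j) * ffz (k + j - a) (absz j) / ((absz j)`!)%:R)))).

Definition psi_one (k m : int) : F := if (k == 0) && (m == 0) then 1 else 0.

Definition psi_invertible (D : int -> int -> F) (K M : int) : Prop :=
  exists (E : int -> int -> F) (K' M' : int),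
    psi_bounded E K' M' /\
    (forall k m, psi_mul D E K M K' M' k m = psi_one k m) /\
    (forall k m, psi_mul E D K' M' K M k m = psi_one k m).

End PsiD.

(* Main.v *)
Require Import Defs.
From mathcomp Require Import all_boot all_order all_algebra.
From mathcomp Require Import complex reals.
From mathcomp Require Import order ssralg ssrnum.
From mathcomp Require Import zify ring lra.
Set Implicit Arguments. Unset Strict Implicit. Unset Printing Implicit Defensive.
Import Order.TTheory GRing.Theory Num.Theory.
Local Open Scope ring_scope.

Section Zsum.
Variable F : fieldType.
Implicit Types (f g : int -> F) (lo hi : int).

Definition zr (lo hi : int) : seq int :=
  if lo <= hi then [seq lo + (i : nat)%:Z | i <- iota 0 (absz (hi - lo)).+1] else [::].

Lemma zsumE lo hi f : zsum lo hi f = \sum_(x <- zr lo hi) f x.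
Proof.
rewrite /zsum /zr; case: ifP => _; last by rewrite big_nil.
rewrite big_map.
have -> : iota 0 (absz (hi - lo)).+1 = index_iota 0 (absz (hi - lo)).+1.
  by rewrite /index_iota subn0.
by rewrite big_mkord.
Qed.

Lemma mem_zr lo hi x : (x \in zr lo hi) = (lo <= x <= hi).
Proof.
rewrite /zr; case: ifP => h.
  apply/mapP/idP.
    by case=> i; rewrite mem_iota => /andP[_ hi'] ->; lia.
  move=> hx; exists (absz (x - lo)); first by rewrite mem_iota; lia.
  lia.
by rewrite in_nil; symmetry; apply/negbTE/negP => /andP[]; lia.
Qed.

Lemma uniq_zr lo hi : uniq (zr lo hi).
Proof.
rewrite /zr; case: ifP => // _.
rewrite map_inj_uniq ?iota_uniq //.
move=> i j h; lia.
Qed.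

Lemma sum_win (r1 r2 : seq int) f g : uniq r1 -> uniq r2 ->
 (forall x, x \in r1 -> x \in r2 -> f x = g x) ->
 (forall x, x \in r1 -> x \notin r2 -> f x = 0) ->
 (forall x, x \in r2 -> x \notin r1 -> g x = 0) ->
 \sum_(x <- r1) f x = \sum_(x <- r2) g x.
Proof.
move=> u1 u2 hfg hf hg.
have e1 : \sum_(x <- r1) f x = \sum_(x <- [seq x <- r1 | x \in r2]) f x.
  rewrite big_filter [RHS]big_mkcond; apply: eq_big_seq => x hx.
  by case: ifP => [//|/negbT h]; rewrite hf.
have e2 : \sum_(x <- r2) g x = \sum_(x <- [seq x <- r2 | x \in r1]) g x.
  rewrite big_filter [RHS]big_mkcond; apply: eq_big_seq => x hx.
  by case: ifP => [//|/negbT h]; rewrite hg.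
rewrite e1 e2.
rewrite (perm_big [seq x <- r2 | x \in r1]); last first.
  apply: uniq_perm; rewrite ?filter_uniq //.
  by move=> x; rewrite !mem_filter andbC.
apply: eq_big_seq => x; rewrite mem_filter => /andP[h1 h2]; exact: hfg.
Qed.

Lemma zsum_win lo1 hi1 lo2 hi2 f g :
 (forall x, lo1 <= x <= hi1 -> lo2 <= x <= hi2 -> f x = g x) ->
 (forall x, lo1 <= x <= hi1 -> ~~ (lo2 <= x <= hi2) -> f x = 0) ->
 (forall x, lo2 <= x <= hi2 -> ~~ (lo1 <= x <= hi1) -> g x = 0) ->
 zsum lo1 hi1 f = zsum lo2 hi2 g.
Proof.
move=> h1 h2 h3; rewrite !zsumE; apply: sum_win; rewrite ?uniq_zr //;
 move=> x; rewrite !mem_zr; auto.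
Qed.

Lemma eq_zsum_in lo hi f g : (forall x, lo <= x <= hi -> f x = g x) ->
  zsum lo hi f = zsum lo hi g.
Proof.
move=> h; apply: zsum_win.
- by move=> x hx _; apply: h.
- by move=> x hx /negP[].
- by move=> x hx /negP[].
Qed.

Lemma eq_zsum lo hi f g : (forall x, f x = g x) -> zsum lo hi f = zsum lo hi g.
Proof. by move=> h; apply: eq_zsum_in => x _; apply: h. Qed.

Lemma zsum_exchange lo1 hi1 lo2 hi2 (f : int -> int -> F) :
  zsum lo1 hi1 (fun x => zsum lo2 hi2 (fun y => f x y)) =
  zsum lo2 hi2 (fun y => zsum lo1 hi1 (fun x => f x y)).
Proof.
rewrite zsumE (eq_bigr (fun x => \sum_(y <- zr lo2 hi2) f x y)); last first.
  by move=> x _; rewrite zsumE.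
rewrite exchange_big zsumE; apply: eq_bigr => y _; by rewrite zsumE.
Qed.

Lemma zsum_eq0 lo hi f : (forall x, lo <= x <= hi -> f x = 0) -> zsum lo hi f = 0.
Proof.
move=> h; rewrite zsumE big1_seq // => x /andP[_]; rewrite mem_zr; exact: h.
Qed.

Lemma zsum_single lo hi f x0 : (forall x, lo <= x <= hi -> x != x0 -> f x = 0) ->
  lo <= x0 <= hi -> zsum lo hi f = f x0.
Proof.
move=> h hx0; rewrite zsumE (bigD1_seq x0) ?mem_zr ?uniq_zr //= big1_seq ?addr0 //.
by move=> x /andP[hne]; rewrite mem_zr => hx; apply: h.
Qed.

Lemma zsumB lo hi f g : zsum lo hi f - zsum lo hi g = zsum lo hi (fun x => f x - g x).
Proof. by rewrite !zsumE sumrB. Qed.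

Lemma zsum_mull lo hi f c : zsum lo hi f * c = zsum lo hi (fun x => f x * c).
Proof. by rewrite !zsumE mulr_suml. Qed.

Lemma zsum_mulr lo hi f c : c * zsum lo hi f = zsum lo hi (fun x => c * f x).
Proof. by rewrite !zsumE mulr_sumr. Qed.

Lemma zsum_bij lo hi (g h : int -> int) f : cancel g h -> cancel h g ->
  (forall x, lo <= x <= hi -> ~~ (lo <= h x <= hi) -> f x = 0) ->
  (forall x, ~~ (lo <= x <= hi) -> lo <= h x <= hi -> f x = 0) ->
  zsum lo hi f = zsum lo hi (fun y => f (g y)).
Proof.
move=> gh hg h1 h2; rewrite !zsumE -(big_map g predT f).
have memg x : (x \in map g (zr lo hi)) = (lo <= h x <= hi).
  by rewrite -{1}(hg x) mem_map ?mem_zr //; apply: can_inj gh.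
have ginj : injective g by apply: can_inj gh.
apply: sum_win; rewrite ?uniq_zr ?(map_inj_uniq ginj) ?uniq_zr //.
- by move=> x; rewrite mem_zr memg; auto.
- by move=> x; rewrite mem_zr memg => a b; apply: h2.
Qed.

Lemma zsum_shift lo hi t f :
  (forall x, lo <= x <= hi -> ~~ (lo <= x + t <= hi) -> f x = 0) ->
  (forall x, ~~ (lo <= x <= hi) -> lo <= x + t <= hi -> f x = 0) ->
  zsum lo hi f = zsum lo hi (fun y => f (y - t)).
Proof.
move=> h1 h2; apply: (@zsum_bij lo hi (fun y => y - t) (fun x => x + t)) => //.
- by move=> y /=; rewrite subrK.
- by move=> y /=; rewrite addrK.
Qed.

Lemma zsum_reflect lo hi t f :
  (forall x, lo <= x <= hi -> ~~ (lo <= t - x <= hi) -> f x = 0) ->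
  (forall x, ~~ (lo <= x <= hi) -> lo <= t - x <= hi -> f x = 0) ->
  zsum lo hi f = zsum lo hi (fun y => f (t - y)).
Proof.
move=> h1 h2; apply: (@zsum_bij lo hi (fun y => t - y) (fun x => t - x)) => //.
- by move=> y /=; rewrite opprB addrC subrK.
- by move=> y /=; rewrite opprB addrC subrK.
Qed.

End Zsum.


Section Comb.
Variable F : numFieldType.
Local Notation ffz := (@ffz F).

Lemma ffz0 a : ffz a 0 = 1.
Proof. by rewrite /ffz big_ord0. Qed.

Lemma ffzS a n : ffz a n.+1 = ffz a n * (a - n%:Z)%:~R.
Proof. by rewrite /ffz big_ord_recr. Qed.

Lemma ffz0S n : ffz 0 n.+1 = 0.
Proof. by rewrite /ffz big_ord_recl /= subrr mul0r. Qed.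

Lemma ffz_add a i j : ffz a (i + j) = ffz a i * ffz (a - i%:Z) j.
Proof.
rewrite /ffz big_split_ord /=; congr (_ * _); apply: eq_bigr => l _.
by congr (_ %:~R); rewrite /= PoszD opprD addrA.
Qed.

Lemma ffzD x y n :
  ffz (x + y) n = \sum_(l < n.+1) ('C(n, l))%:R * ffz x l * ffz y (n - l).
Proof.
elim: n => [|n IH].
  by rewrite big_ord1 /= !ffz0 bin0 !mulr1.
rewrite ffzS IH mulr_suml.
have step (i : 'I_n.+1) : ('C(n, i))%:R * ffz x i * ffz y (n - i) * (x + y - n%:Z)%:~R
   = ('C(n, i))%:R * ffz x i.+1 * ffz y (n - i)
     + ('C(n, i))%:R * ffz x i * ffz y (n - i).+1.
  have hi : (i <= n)%N by rewrite -ltnS.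
  have -> : (x + y - n%:Z)%:~R = (x - i%:Z)%:~R + (y - (n - i)%N%:Z)%:~R :> F.
    by rewrite -intrD; congr (_ %:~R); lia.
  rewrite !ffzS; ring.
rewrite (eq_bigr _ (fun i _ => step i)) big_split /=.
rewrite [RHS]big_ord_recl /=.
have e : \sum_(i < n.+1) ('C(n.+1, bump 0 i))%:R * ffz x (bump 0 i) * ffz y (n.+1 - bump 0 i)
  = \sum_(i < n.+1) ('C(n, i.+1))%:R * ffz x i.+1 * ffz y (n - i) +
    \sum_(i < n.+1) ('C(n, i))%:R * ffz x i.+1 * ffz y (n - i).
  rewrite -big_split; apply: eq_bigr => i _.
  by rewrite /bump /= binS natrD subSS; ring.
rewrite e.
rewrite [LHS]addrC [RHS]addrA; congr (_ + _).
rewrite big_ord_recl [X in _ = _ + X]big_ord_recr /=.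
have -> : ('C(n, n.+1))%:R = 0 :> F by rewrite bin_small.
rewrite !mul0r addr0 !bin0 !subn0.
congr (_ + _); apply: eq_bigr => i _.
by rewrite /bump /= subnSK.
Qed.

Definition W (b c j : int) : F :=
  ffz b (absz j) * ffz c (absz j) / ((absz j)`!)%:R.

Lemma W0 b c : W b c 0 = 1.
Proof. by rewrite /W /= !ffz0 mulr1 divr1. Qed.

Lemma fact_neq0 n : (n`!)%:R != 0 :> F.
Proof. by rewrite pnatr_eq0 -lt0n fact_gt0. Qed.

Lemma bin_neq0 n l : (l <= n)%N -> ('C(n, l))%:R != 0 :> F.
Proof. by move=> h; rewrite pnatr_eq0 -lt0n bin_gt0. Qed.

Definition T3 (b c d e : int) (P Q R : nat) : F :=
  ffz b (P + R) * ffz c P * ffz d Q * ffz e (Q + R) /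
  ((P`!)%:R * (Q`!)%:R * (R`!)%:R).

Lemma stepL b c d e (j i : nat) :
  W b c j%:Z * W (b + d - j%:Z) e i%:Z =
  \sum_(l < i.+1) T3 b c d e j (i - l) l.
Proof.
rewrite /W /= (_ : b + d - j%:Z = (b - j%:Z) + d); last by ring.
rewrite ffzD !mulr_suml mulr_sumr; apply: eq_bigr => l _.
have hl : (l <= i)%N by rewrite -ltnS.
rewrite /T3 ffz_add (subnK hl).
rewrite -(bin_fact hl) natrM natrM.
have h1 := fact_neq0 j; have h2 := fact_neq0 l; have h3 := fact_neq0 (i - l).
have h4 := bin_neq0 hl.
field.
by rewrite h1 h2 h3 h4.
Qed.

Lemma stepR b c d e (j i : nat) :
  W b (c + e - j%:Z) i%:Z * W d e j%:Z =
  \sum_(l < i.+1) T3 b c d e (i - l) j l.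
Proof.
rewrite /W /= (_ : c + e - j%:Z = (e - j%:Z) + c); last by ring.
rewrite ffzD mulr_sumr !mulr_suml; apply: eq_bigr => l _.
have hl : (l <= i)%N by rewrite -ltnS.
rewrite /T3 (subnK hl) ffz_add.
rewrite -(bin_fact hl) natrM natrM.
have h1 := fact_neq0 j; have h2 := fact_neq0 l; have h3 := fact_neq0 (i - l).
have h4 := bin_neq0 hl.
field.
by rewrite h1 h2 h3 h4.
Qed.

Lemma tri_exchange n (G : nat -> nat -> F) :
  \sum_(i < n.+1) \sum_(l < i.+1) G i l =
  \sum_(l < n.+1) \sum_(l <= i < n.+1) G i l.
Proof.
rewrite (eq_bigr (fun i : 'I_n.+1 => \sum_(l < n.+1 | (l < i.+1)%N) G i l)); last first.
  by move=> i _; rewrite (big_ord_widen n.+1 (G i)) // ltnS -ltnS.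
rewrite (exchange_big_dep predT) //=; apply: eq_bigr => l _.
rewrite big_geq_mkord; apply: eq_bigl => i /=.
by rewrite ltnS.
Qed.

Lemma key b c d e n :
  \sum_(i < n.+1) W b c (n - i)%N%:Z * W (b + d - (n - i)%N%:Z) e i%:Z =
  \sum_(i < n.+1) W b (c + e - (n - i)%N%:Z) i%:Z * W d e (n - i)%N%:Z.
Proof.
rewrite (eq_bigr _ (fun (i : 'I_n.+1) _ => stepL b c d e (n - i) i)).
rewrite (eq_bigr _ (fun (i : 'I_n.+1) _ => stepR b c d e (n - i) i)).
rewrite (tri_exchange n (fun i l => T3 b c d e (n - i) (i - l) l)).
rewrite (tri_exchange n (fun i l => T3 b c d e (i - l) (n - i) l)).
apply: eq_bigr => l _; rewrite big_nat_rev /=; apply: eq_big_nat => i /andP[h1 h2].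
congr T3; lia.
Qed.


End Comb.


Section P1.
Variable F : numFieldType.
Local Notation W := (@W F).
Implicit Types A B C : int -> int -> F.

Lemma bndK C K M k m : psi_bounded C K M -> K < k -> C k m = 0.
Proof. by move=> h hk; apply: h; rewrite hk. Qed.

Lemma bndM C K M k m : psi_bounded C K M -> M < m -> C k m = 0.
Proof. by move=> h hm; apply: h; rewrite hm orbT. Qed.

Lemma WR A B K1 M1 K2 M2 k m N :
  psi_bounded A K1 M1 -> psi_bounded B K2 M2 -> 0 <= N ->
  K1 + K2 - k <= N -> -N <= k - K2 -> K1 <= N -> -N <= m - M2 -> M1 <= N ->
  psi_mul A B K1 M1 K2 M2 k m =
  zsum 0 N (fun j => zsum (-N) N (fun a => zsum (-N) N (fun b =>
    A a b * B (k + j - a) (m + j - b) * W b (k + j - a) j))).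
Proof.
move=> hA hB h0 h1 h2 h3 h4 h5; rewrite /psi_mul.
apply: zsum_win.
- move=> j hj _; apply: zsum_win.
  + move=> a _ _; apply: zsum_win => //.
    * by move=> b hb /negP[]; lia.
    * move=> b hb hb'.
      case: (lerP b M1) => hb1; last by rewrite (bndM _ hA) ?mul0r.
      case: (lerP (m + j - b) M2) => hb2; last by rewrite (bndM _ hB) ?mulr0 ?mul0r.
      lia.
  + by move=> a ha /negP[]; lia.
  + move=> a ha ha'; apply: zsum_eq0 => b hb.
    case: (lerP a K1) => ha1; last by rewrite (bndK _ hA) ?mul0r.
    case: (lerP (k + j - a) K2) => ha2; last by rewrite (bndK _ hB) ?mulr0 ?mul0r.
    lia.
- by move=> j hj /negP[]; lia.
- move=> j hj hj'; apply: zsum_eq0 => a ha; apply: zsum_eq0 => b hb.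
  case: (lerP a K1) => ha1; last by rewrite (bndK _ hA) ?mul0r.
  case: (lerP (k + j - a) K2) => ha2; last by rewrite (bndK _ hB) ?mulr0 ?mul0r.
  lia.
Qed.

Lemma WRr A B K1 M1 K2 M2 k m N :
  psi_bounded A K1 M1 -> psi_bounded B K2 M2 -> 0 <= N ->
  K1 + K2 - k <= N -> -N <= k - K2 -> K1 <= N -> -N <= m - M2 -> M1 <= N ->
  -N <= k - K1 -> K2 <= N -> -N <= m - M1 -> M2 <= N ->
  psi_mul A B K1 M1 K2 M2 k m =
  zsum 0 N (fun j => zsum (-N) N (fun c => zsum (-N) N (fun d =>
    A (k + j - c) (m + j - d) * B c d * W (m + j - d) c j))).
Proof.
move=> hA hB h0 h1 h2 h3 h4 h5 h6 h7 h8 h9.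
rewrite (WR (N := N) hA hB) //; apply: eq_zsum_in => j hj.
rewrite (@zsum_reflect _ _ _ (k + j)); last first.
- move=> a ha ha'; apply: zsum_eq0 => b hb.
  case: (lerP a K1) => ha1; last by rewrite (bndK _ hA) ?mul0r.
  case: (lerP (k + j - a) K2) => ha2; last by rewrite (bndK _ hB) ?mulr0 ?mul0r.
  lia.
- move=> a ha ha'; apply: zsum_eq0 => b hb.
  case: (lerP a K1) => ha1; last by rewrite (bndK _ hA) ?mul0r.
  case: (lerP (k + j - a) K2) => ha2; last by rewrite (bndK _ hB) ?mulr0 ?mul0r.
  lia.
apply: eq_zsum => c.
rewrite (@zsum_reflect _ _ _ (m + j)); last first.
- move=> b hb hb'.
  case: (lerP b M1) => hb1; last by rewrite (bndM _ hA) ?mul0r.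
  case: (lerP (m + j - b) M2) => hb2; last by rewrite (bndM _ hB) ?mulr0 ?mul0r.
  lia.
- move=> b hb hb'.
  case: (lerP b M1) => hb1; last by rewrite (bndM _ hA) ?mul0r.
  case: (lerP (m + j - b) M2) => hb2; last by rewrite (bndM _ hB) ?mulr0 ?mul0r.
  lia.
apply: eq_zsum => d.
by rewrite !subKr.
Qed.

End P1.


Section P2.
Variable F : numFieldType.
Local Notation W := (@W F).
Local Notation one := (@psi_one F).
Implicit Types A B C G : int -> int -> F.

Lemma psi_mul_bounded A B K1 M1 K2 M2 :
  psi_bounded (psi_mul A B K1 M1 K2 M2) (K1 + K2) (M1 + M2).
Proof.
move=> k m /orP[hk|hm]; rewrite /psi_mul.
  by rewrite /zsum ifF //; apply/negbTE; lia.
apply: zsum_eq0 => j hj; apply: zsum_eq0 => a ha.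
by rewrite /zsum ifF //; apply/negbTE; lia.
Qed.

Lemma psi_mul_ext A A' B B' K1 M1 K2 M2 k m :
  (forall a b, A a b = A' a b) -> (forall a b, B a b = B' a b) ->
  psi_mul A B K1 M1 K2 M2 k m = psi_mul A' B' K1 M1 K2 M2 k m.
Proof.
move=> hA hB; rewrite /psi_mul; apply: eq_zsum => j; apply: eq_zsum => a.
by apply: eq_zsum => b; rewrite hA hB.
Qed.

Lemma psi_mulBr A B1 B2 K1 M1 K2 M2 k m :
  psi_mul A B1 K1 M1 K2 M2 k m - psi_mul A B2 K1 M1 K2 M2 k m =
  psi_mul A (fun x y => B1 x y - B2 x y) K1 M1 K2 M2 k m.
Proof.
rewrite /psi_mul zsumB; apply: eq_zsum => j; rewrite zsumB; apply: eq_zsum => a.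
by rewrite zsumB; apply: eq_zsum => b; ring.
Qed.

Lemma psi_mulBl A1 A2 B K1 M1 K2 M2 k m :
  psi_mul A1 B K1 M1 K2 M2 k m - psi_mul A2 B K1 M1 K2 M2 k m =
  psi_mul (fun x y => A1 x y - A2 x y) B K1 M1 K2 M2 k m.
Proof.
rewrite /psi_mul zsumB; apply: eq_zsum => j; rewrite zsumB; apply: eq_zsum => a.
by rewrite zsumB; apply: eq_zsum => b; ring.
Qed.

Lemma one_bnd : psi_bounded one 0 0.
Proof.
move=> k m h; rewrite /psi_one; case: ifP => // /andP[/eqP hk /eqP hm]; lia.
Qed.

Lemma one0 k m : (k != 0) || (m != 0) -> one k m = 0.
Proof.
by move=> h; rewrite /psi_one ifF //; apply/negbTE; rewrite negb_and.
Qed.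

Lemma one00 : one 0 0 = 1.
Proof. by rewrite /psi_one !eqxx. Qed.

Lemma Wc0 b j : j != 0 -> W b 0 j = 0.
Proof.
move=> hj; rewrite /W; have : (absz j != 0)%N by rewrite absz_eq0.
case: (absz j) => [|n] hn; first by rewrite eqxx in hn.
by rewrite ffz0S mulr0 mul0r.
Qed.

Lemma Wb0 c j : j != 0 -> W 0 c j = 0.
Proof.
move=> hj; rewrite /W; have : (absz j != 0)%N by rewrite absz_eq0.
case: (absz j) => [|n] hn; first by rewrite eqxx in hn.
by rewrite ffz0S !mul0r.
Qed.

Lemma psi_mul1r A K1 M1 k m : psi_bounded A K1 M1 ->
  psi_mul A one K1 M1 0 0 k m = A k m.
Proof.
move=> hA.
pose N : int := `|k| + `|m| + `|K1| + `|M1| + 1.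
rewrite (WR (N := N) hA one_bnd); try lia.
rewrite (@zsum_single _ _ _ _ 0); last by lia.
- rewrite (@zsum_single _ _ _ _ k); last by lia.
  + rewrite (@zsum_single _ _ _ _ m); last by lia.
    * by rewrite !addr0 !subrr one00 W0 !mulr1.
    * move=> b hb hne; rewrite one0 ?mulr0 ?mul0r //; lia.
  + move=> a ha hne; apply: zsum_eq0 => b hb.
    rewrite one0 ?mulr0 ?mul0r //; lia.
- move=> j hj hne; apply: zsum_eq0 => a ha; apply: zsum_eq0 => b hb.
  case: (boolP ((k + j - a == 0) && (m + j - b == 0))) => h.
    by case/andP: h => /eqP -> _; rewrite Wc0 ?mulr0.
  by rewrite one0 ?mulr0 ?mul0r // -negb_and.
Qed.

Lemma psi_mul1l B K2 M2 k m : psi_bounded B K2 M2 ->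
  psi_mul one B 0 0 K2 M2 k m = B k m.
Proof.
move=> hB.
pose N : int := `|k| + `|m| + `|K2| + `|M2| + 1.
rewrite (WR (N := N) one_bnd hB); try lia.
rewrite (@zsum_single _ _ _ _ 0); last by lia.
- rewrite (@zsum_single _ _ _ _ 0); last by lia.
  + rewrite (@zsum_single _ _ _ _ 0); last by lia.
    * rewrite one00 W0 !mulr1 mul1r.
      by congr (B _ _); ring.
    * move=> b hb hne; rewrite one0 ?mul0r //; lia.
  + move=> a ha hne; apply: zsum_eq0 => b hb.
    rewrite one0 ?mul0r //; lia.
- move=> j hj hne; apply: zsum_eq0 => a ha; apply: zsum_eq0 => b hb.
  case: (boolP ((a == 0) && (b == 0))) => h.
    by case/andP: h => _ /eqP ->; rewrite Wb0 ?mulr0.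
  by rewrite one0 ?mulr0 ?mul0r // -negb_and.
Qed.

Lemma loc_right D G K M K' M' p q :
  psi_bounded D K M -> psi_bounded G K' M' ->
  (forall p' q', p <= p' -> q <= q' -> (p' != p) || (q' != q) -> G p' q' = 0) ->
  psi_mul D G K M K' M' (p + K) (q + M) = D K M * G p q.
Proof.
move=> hD hG hQ.
pose N : int := `|p| + `|q| + `|K| + `|M| + `|K'| + `|M'| + 1.
rewrite (WR (N := N) hD hG); try lia.
rewrite (@zsum_single _ _ _ _ 0); last by lia.
- rewrite (@zsum_single _ _ _ _ K); last by lia.
  + rewrite (@zsum_single _ _ _ _ M); last by lia.
    * have -> : p + K + 0 - K = p by ring.
      have -> : q + M + 0 - M = q by ring.
      by rewrite W0 mulr1.
    * move=> b hb hne.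
      case: (lerP b M) => hb1; last by rewrite (bndM _ hD) ?mul0r.
      rewrite hQ ?mulr0 ?mul0r //; lia.
  + move=> a ha hne; apply: zsum_eq0 => b hb.
    case: (lerP a K) => ha1; last by rewrite (bndK _ hD) ?mul0r.
    case: (lerP b M) => hb1; last by rewrite (bndM _ hD) ?mul0r.
    rewrite hQ ?mulr0 ?mul0r //; lia.
- move=> j hj hne; apply: zsum_eq0 => a ha; apply: zsum_eq0 => b hb.
  case: (lerP a K) => ha1; last by rewrite (bndK _ hD) ?mul0r.
  case: (lerP b M) => hb1; last by rewrite (bndM _ hD) ?mul0r.
  rewrite hQ ?mulr0 ?mul0r //; lia.
Qed.

Lemma loc_left D G K M K' M' p q :
  psi_bounded D K M -> psi_bounded G K' M' ->
  (forall p' q', p <= p' -> q <= q' -> (p' != p) || (q' != q) -> G p' q' = 0) ->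
  psi_mul G D K' M' K M (p + K) (q + M) = G p q * D K M.
Proof.
move=> hD hG hQ.
pose N : int := `|p| + `|q| + `|K| + `|M| + `|K'| + `|M'| + 1.
rewrite (WR (N := N) hG hD); try lia.
rewrite (@zsum_single _ _ _ _ 0); last by lia.
- rewrite (@zsum_single _ _ _ _ p); last by lia.
  + rewrite (@zsum_single _ _ _ _ q); last by lia.
    * have -> : p + K + 0 - p = K by ring.
      have -> : q + M + 0 - q = M by ring.
      by rewrite W0 mulr1.
    * move=> b hb hne.
      case: (lerP (q + M + 0 - b) M) => hb1; last by rewrite (bndM _ hD) ?mulr0 ?mul0r.
      rewrite hQ ?mulr0 ?mul0r //; lia.
  + move=> a ha hne; apply: zsum_eq0 => b hb.
    case: (lerP (p + K + 0 - a) K) => ha1; last by rewrite (bndK _ hD) ?mulr0 ?mul0r.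
    case: (lerP (q + M + 0 - b) M) => hb1; last by rewrite (bndM _ hD) ?mulr0 ?mul0r.
    rewrite hQ ?mulr0 ?mul0r //; lia.
- move=> j hj hne; apply: zsum_eq0 => a ha; apply: zsum_eq0 => b hb.
  case: (lerP (p + K + j - a) K) => ha1; last by rewrite (bndK _ hD) ?mulr0 ?mul0r.
  case: (lerP (q + M + j - b) M) => hb1; last by rewrite (bndM _ hD) ?mulr0 ?mul0r.
  rewrite hQ ?mulr0 ?mul0r //; lia.
Qed.

End P2.


Section Solver.
Variable F : fieldType.
Variables (K' M' : int) (c : F) (tgt : int -> int -> F)
  (Phi : (int -> int -> F) -> int -> int -> F).
Hypothesis c0 : c != 0.
Hypothesis loc : forall E1 E2 p q, psi_bounded E1 K' M' -> psi_bounded E2 K' M' ->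
  p <= K' -> q <= M' ->
  (forall p' q', p <= p' -> q <= q' -> (p' != p) || (q' != q) -> E1 p' q' = E2 p' q') ->
  Phi E1 p q - c * E1 p q = Phi E2 p q - c * E2 p q.

Definition inb p q := (p <= K') && (q <= M').
Definition mu p q : nat := absz (K' - p + (M' - q)).
Definition step (G : int -> int -> F) p q :=
  if inb p q then (tgt p q - (Phi G p q - c * G p q)) / c else 0.
Definition It n := iter n step (fun _ _ => 0).

Lemma It_bnd n : psi_bounded (It n) K' M'.
Proof.
case: n => [|n] p q h //=.
by rewrite /step ifF //; apply/negbTE; rewrite /inb; lia.
Qed.

Lemma out0 n p q : ~~ inb p q -> It n p q = 0.
Proof. by move=> h; apply: It_bnd; move: h; rewrite /inb; lia. Qed.

Lemma stab d : forall p q, inb p q -> mu p q = d -> forall n n',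
  (d < n)%N -> (d < n')%N -> It n p q = It n' p q.
Proof.
elim/ltn_ind: d => d IH p q hin hmu [|n] [|n'] // hn hn'.
rewrite /It !iterS -/(It n) -/(It n') /step hin.
have hin' := hin; move: hin'; rewrite /inb => /andP[hp hq].
rewrite (loc (E1 := It n) (E2 := It n') (It_bnd n) (It_bnd n') hp hq) //.
move=> p' q' hp' hq' hne.
case: (boolP (inb p' q')) => hin2; last by rewrite !out0.
apply: (IH (mu p' q')) => //.
- by move: hin2; rewrite -hmu /mu /inb; lia.
- by move: hin2; rewrite /mu /inb; move: hn; rewrite -hmu /mu; lia.
- by move: hin2; rewrite /mu /inb; move: hn'; rewrite -hmu /mu; lia.
Qed.

Definition Esol p q := It (mu p q).+1 p q.

Lemma Esol_bnd : psi_bounded Esol K' M'.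
Proof. by move=> p q h; rewrite /Esol It_bnd. Qed.

Lemma Esol_It p q n : inb p q -> (mu p q < n)%N -> Esol p q = It n p q.
Proof. by move=> h hn; rewrite /Esol (stab h erefl (n := (mu p q).+1) (n' := n)). Qed.

Lemma Esol_solves p q : inb p q -> Phi Esol p q = tgt p q.
Proof.
move=> hin; have hin' := hin; move: hin'; rewrite /inb => /andP[hp hq].
have e1 : Esol p q = It (mu p q).+1 p q by [].
have e2 : Phi Esol p q - c * Esol p q = Phi (It (mu p q)) p q - c * It (mu p q) p q.
  apply: loc => //; first exact: Esol_bnd; first exact: It_bnd.
  move=> p' q' hp' hq' hne.
  case: (boolP (inb p' q')) => hin2; last first.
    by rewrite out0 // Esol_bnd //; move: hin2; rewrite /inb; lia.
  apply: Esol_It => //; move: hin2; rewrite /mu /inb; lia.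
move: e1; rewrite /It iterS -/(It (mu p q)) /step hin -e2.
set R := Phi Esol p q - c * Esol p q => e1.
have -> : Phi Esol p q = R + c * Esol p q by rewrite /R; ring.
rewrite [Esol p q]e1; field; exact: c0.
Qed.

End Solver.


Section Assoc.
Variable F : numFieldType.
Local Notation W := (@W F).
Implicit Types A B C : int -> int -> F.

Lemma reorderL (L H N : int) (Y : int -> int -> int -> int -> int -> int -> F) :
  zsum 0 N (fun i => zsum L H (fun e => zsum L H (fun f =>
    zsum 0 N (fun j => zsum L H (fun a => zsum L H (fun b => Y i e f j a b)))))) =
  zsum L H (fun a => zsum L H (fun b => zsum L H (fun e => zsum L H (fun f =>
    zsum 0 N (fun i => zsum 0 N (fun j => Y i e f j a b)))))).
Proof.
under eq_zsum => i do under eq_zsum => e do under eq_zsum => f do rewrite zsum_exchange.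
under eq_zsum => i do under eq_zsum => e do under eq_zsum => f do
  under eq_zsum => a do rewrite zsum_exchange.
rewrite zsum_exchange.
under eq_zsum => e do rewrite zsum_exchange.
under eq_zsum => e do under eq_zsum => f do rewrite zsum_exchange.
under eq_zsum => e do under eq_zsum => f do under eq_zsum => a do rewrite zsum_exchange.
under eq_zsum => e do rewrite zsum_exchange.
under eq_zsum => e do under eq_zsum => a do rewrite zsum_exchange.
rewrite zsum_exchange.
under eq_zsum => a do rewrite zsum_exchange.
by [].
Qed.

Lemma reorderR (L H N : int) (Y : int -> int -> int -> int -> int -> int -> F) :
  zsum 0 N (fun i => zsum L H (fun a => zsum L H (fun b =>
    zsum 0 N (fun j => zsum L H (fun e => zsum L H (fun f => Y i a b j e f)))))) =
  zsum L H (fun a => zsum L H (fun b => zsum L H (fun e => zsum L H (fun f =>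
    zsum 0 N (fun i => zsum 0 N (fun j => Y i a b j e f)))))).
Proof.
under eq_zsum => i do under eq_zsum => a do under eq_zsum => b do rewrite zsum_exchange.
under eq_zsum => i do under eq_zsum => a do under eq_zsum => b do
  under eq_zsum => e do rewrite zsum_exchange.
rewrite zsum_exchange.
under eq_zsum => a do rewrite zsum_exchange.
under eq_zsum => a do under eq_zsum => b do rewrite zsum_exchange.
under eq_zsum => a do under eq_zsum => b do under eq_zsum => e do rewrite zsum_exchange.
by [].
Qed.

Lemma zsum_diag N (G : int -> F) (X : int -> int -> F) : 0 <= N ->
  (forall s, N < s -> G s = 0) ->
  zsum 0 N (fun i => zsum 0 N (fun j => G (i + j) * X i j)) =
  zsum 0 N (fun s => G s * zsum 0 s (fun i => X i (s - i))).
Proof.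
move=> hN hG.
transitivity (zsum 0 N (fun i => zsum 0 N (fun s =>
   if i <= s then G s * X i (s - i) else 0))).
  apply: eq_zsum_in => i hi.
  transitivity (zsum 0 N (fun j => if 0 <= j then G (i + j) * X i j else 0)).
    by apply: eq_zsum_in => j hj; rewrite ifT //; lia.
  rewrite (@zsum_shift _ _ _ i); last first.
  - by move=> x hx hx'; rewrite ifF //; apply/negbTE; lia.
  - move=> x hx hx'; case: ifP => // _; rewrite hG ?mul0r //; lia.
  apply: eq_zsum => s; rewrite subr_ge0; case: ifP => // _.
  by rewrite addrC subrK.
rewrite zsum_exchange; apply: eq_zsum_in => s hs.
rewrite zsum_mulr; apply: zsum_win.
- by move=> x hx hx'; rewrite ifT //; lia.
- by move=> x hx hx'; rewrite ifF //; apply/negbTE; lia.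
- by move=> x hx /negP[]; lia.
Qed.

End Assoc.


Section Assoc2.
Variable F : numFieldType.
Local Notation W := (@W F).
Implicit Types A B C : int -> int -> F.

Lemma zsum0_nat (n : nat) (g : int -> F) :
  zsum 0 n%:Z g = \sum_(i < n.+1) g i%:Z.
Proof.
rewrite /zsum le0z_nat subr0 /=; apply: eq_bigr => i _; by rewrite add0r.
Qed.

Lemma psi_assoc A B C K1 M1 K2 M2 K3 M3 k m :
  psi_bounded A K1 M1 -> psi_bounded B K2 M2 -> psi_bounded C K3 M3 ->
  psi_mul (psi_mul A B K1 M1 K2 M2) C (K1 + K2) (M1 + M2) K3 M3 k m =
  psi_mul A (psi_mul B C K2 M2 K3 M3) K1 M1 (K2 + K3) (M2 + M3) k m.
Proof.
move=> hA hB hC.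
have hA' := hA; have hB' := hB; have hC' := hC.
rewrite /psi_bounded in hA' hB' hC'.
pose N : int := `|k| + `|m| + `|K1| + `|K2| + `|K3| + `|M1| + `|M2| + `|M3| + 1.
have hAB : psi_bounded (psi_mul A B K1 M1 K2 M2) (K1 + K2) (M1 + M2) by apply: psi_mul_bounded.
have hBC : psi_bounded (psi_mul B C K2 M2 K3 M3) (K2 + K3) (M2 + M3) by apply: psi_mul_bounded.
rewrite (WRr (N := N) hAB hC); try lia.
rewrite (WR (N := N) hA hBC); try lia.
transitivity (zsum 0 N (fun i => zsum (-N) N (fun e => zsum (-N) N (fun f =>
  zsum 0 N (fun j => zsum (-N) N (fun a => zsum (-N) N (fun b =>
   A a b * B (k + i - e + j - a) (m + i - f + j - b) * W b (k + i - e + j - a) j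
   * C e f * W (m + i - f) e i))))))).
  apply: eq_zsum_in => i hi; apply: eq_zsum_in => e he; apply: eq_zsum_in => f hf.
  case: (lerP e K3) => he3; last first.
    rewrite (hC' e f) ?he3 // mulr0 mul0r; symmetry.
    apply: zsum_eq0 => j _; apply: zsum_eq0 => a _; apply: zsum_eq0 => b _ /=.
    by rewrite ?mulr0 ?mul0r.
  case: (lerP f M3) => hf3; last first.
    rewrite (hC' e f) ?hf3 ?orbT // mulr0 mul0r; symmetry.
    apply: zsum_eq0 => j _; apply: zsum_eq0 => a _; apply: zsum_eq0 => b _ /=.
    by rewrite ?mulr0 ?mul0r.
  rewrite (WR (N := N) hA hB); try lia.
  rewrite !zsum_mull; apply: eq_zsum => j; rewrite !zsum_mull; apply: eq_zsum => a.
  by rewrite !zsum_mull.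
transitivity (zsum 0 N (fun i => zsum (-N) N (fun a => zsum (-N) N (fun b =>
  zsum 0 N (fun j => zsum (-N) N (fun e => zsum (-N) N (fun f =>
   A a b * (B (k + i - a + j - e) (m + i - b + j - f) * C e f * W (m + i - b + j - f) e j)
   * W b (k + i - a) i))))))); last first.
  apply: eq_zsum_in => i hi; apply: eq_zsum_in => a ha; apply: eq_zsum_in => b hb.
  case: (lerP a K1) => ha1; last first.
    rewrite (hA' a b) ?ha1 // !mul0r.
    apply: zsum_eq0 => j _; apply: zsum_eq0 => e _; apply: zsum_eq0 => f _ /=.
    by rewrite ?mulr0 ?mul0r.
  case: (lerP b M1) => hb1; last first.
    rewrite (hA' a b) ?hb1 ?orbT // !mul0r.
    apply: zsum_eq0 => j _; apply: zsum_eq0 => e _; apply: zsum_eq0 => f _ /=.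
    by rewrite ?mulr0 ?mul0r.
  rewrite (WRr (N := N) hB hC); try lia.
  rewrite zsum_mulr zsum_mull; apply: eq_zsum => j.
  rewrite zsum_mulr zsum_mull; apply: eq_zsum => e.
  by rewrite zsum_mulr zsum_mull.
rewrite reorderL reorderR.
apply: eq_zsum => a; apply: eq_zsum => b; apply: eq_zsum => e; apply: eq_zsum => f.
pose G s := A a b * B (k + s - a - e) (m + s - b - f) * C e f.
have hG : forall s, N < s -> G s = 0.
  move=> s hs; rewrite /G.
  case: (lerP a K1) => ha1; last by rewrite (hA' a b) ?ha1 // !mul0r.
  case: (lerP e K3) => he3; last by rewrite (hC' e f) ?he3 // mulr0.
  rewrite (hB' (k + s - a - e) (m + s - b - f)) ?mulr0 ?mul0r //; lia.
have hN : 0 <= N by lia.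
transitivity (zsum 0 N (fun i => zsum 0 N (fun j => G (i + j) *
   (W b (k + (i + j) - a - e) j * W (m + i - f) e i)))).
  apply: eq_zsum => i; apply: eq_zsum => j; rewrite /G.
  have -> : k + i - e + j - a = k + (i + j) - a - e by ring.
  have -> : m + i - f + j - b = m + (i + j) - b - f by ring.
  ring.
transitivity (zsum 0 N (fun i => zsum 0 N (fun j => G (i + j) *
   (W b (k + i - a) i * W (m + (i + j) - b - f) e j)))); last first.
  apply: eq_zsum => i; apply: eq_zsum => j; rewrite /G.
  have -> : k + i - a + j - e = k + (i + j) - a - e by ring.
  have -> : m + i - b + j - f = m + (i + j) - b - f by ring.
  ring.
rewrite !zsum_diag //; apply: eq_zsum_in => s /andP[hs0 _]; congr (_ * _).
have [n ->] : exists n : nat, s = n%:Z by exists (absz s); lia.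
rewrite !zsum0_nat.
have := @key F b (k + n%:Z - a - e) (m + n%:Z - b - f) e n.
move=> hk.
transitivity (\sum_(i < n.+1) W b (k + n%:Z - a - e) (n - i)%N%:Z *
   W (b + (m + n%:Z - b - f) - (n - i)%N%:Z) e i%:Z).
  apply: eq_bigr => i _; have hi : (i <= n)%N by rewrite -ltnS.
  by congr (W _ _ _ * W _ _ _); lia.
rewrite hk; apply: eq_bigr => i _; have hi : (i <= n)%N by rewrite -ltnS.
by congr (W _ _ _ * W _ _ _); lia.
Qed.

End Assoc2.

Section Main.
Variable F : numFieldType.
Local Notation one := (@psi_one F).
Implicit Types A B C G : int -> int -> F.


Lemma main_inv (D : int -> int -> F) K M :
  psi_bounded D K M -> D K M != 0 -> psi_invertible D K M.
Proof.
move=> hD hc.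
pose PhiR := fun (E : int -> int -> F) p q => psi_mul D E K M (-K) (-M) (p + K) (q + M).
pose PhiL := fun (E : int -> int -> F) p q => psi_mul E D (-K) (-M) K M (p + K) (q + M).
pose tgt := fun p q => one (p + K) (q + M).
have locR : forall E1 E2 p q, psi_bounded E1 (-K) (-M) -> psi_bounded E2 (-K) (-M) ->
  p <= -K -> q <= -M ->
  (forall p' q', p <= p' -> q <= q' -> (p' != p) || (q' != q) -> E1 p' q' = E2 p' q') ->
  PhiR E1 p q - D K M * E1 p q = PhiR E2 p q - D K M * E2 p q.
  move=> E1 E2 p q h1 h2 hp hq he.
  have e : PhiR E1 p q - PhiR E2 p q = D K M * (E1 p q - E2 p q).
    rewrite /PhiR psi_mulBr loc_right //.
    - by move=> a b hab; rewrite h1 // h2 // subrr.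
    - by move=> p' q' hp' hq' hne; rewrite he // subrr.
  rewrite -[PhiR E1 p q](subrK (PhiR E2 p q)) e; ring.
have locL : forall E1 E2 p q, psi_bounded E1 (-K) (-M) -> psi_bounded E2 (-K) (-M) ->
  p <= -K -> q <= -M ->
  (forall p' q', p <= p' -> q <= q' -> (p' != p) || (q' != q) -> E1 p' q' = E2 p' q') ->
  PhiL E1 p q - D K M * E1 p q = PhiL E2 p q - D K M * E2 p q.
  move=> E1 E2 p q h1 h2 hp hq he.
  have e : PhiL E1 p q - PhiL E2 p q = (E1 p q - E2 p q) * D K M.
    rewrite /PhiL psi_mulBl loc_left //.
    - by move=> a b hab; rewrite h1 // h2 // subrr.
    - by move=> p' q' hp' hq' hne; rewrite he // subrr.
  rewrite -[PhiL E1 p q](subrK (PhiL E2 p q)) e; ring.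
pose E := Esol (-K) (-M) (D K M) tgt PhiR.
pose E' := Esol (-K) (-M) (D K M) tgt PhiL.
have hE : psi_bounded E (-K) (-M) by apply: Esol_bnd.
have hE' : psi_bounded E' (-K) (-M) by apply: Esol_bnd.
have sR := Esol_solves tgt hc locR.
have sL := Esol_solves tgt hc locL.
have hR : forall k m, psi_mul D E K M (-K) (-M) k m = one k m.
  move=> k m.
  case: (boolP ((k - K <= -K) && (m - M <= -M))) => h.
    have := sR (k - K) (m - M) h; rewrite /PhiR /tgt !subrK; exact.
  rewrite psi_mul_bounded ?one0 //; lia.
have hL : forall k m, psi_mul E' D (-K) (-M) K M k m = one k m.
  move=> k m.
  case: (boolP ((k - K <= -K) && (m - M <= -M))) => h.
    have := sL (k - K) (m - M) h; rewrite /PhiL /tgt !subrK; exact.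
  rewrite psi_mul_bounded ?one0 //; lia.
have eE : forall p q, E' p q = E p q.
  move=> p q.
  rewrite -(psi_mul1r p q hE').
  transitivity (psi_mul E' (psi_mul D E K M (-K) (-M)) (-K) (-M) (K + -K) (M + -M) p q).
    rewrite !addrN; apply: psi_mul_ext => // a b; by rewrite hR.
  rewrite -psi_assoc //.
  transitivity (psi_mul one E 0 0 (-K) (-M) p q); last by rewrite psi_mul1l.
  rewrite !addNr; apply: psi_mul_ext => // a b; by rewrite hL.
exists E, (-K), (-M); split => //; split => // k m.
rewrite -(hL k m); apply: psi_mul_ext => // a b.
Qed.

End Main.

Local Open Scope complex_scope.

Theorem lemma2p1 (R : realType) (C : int -> int -> R[i]) (K M : int) :
  psi_bounded C K M -> C K M != 0 -> psi_invertible C K M.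
Proof. exact: main_inv. Qed.
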